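(* Let $K$ be a field with a non-trivial non-Archimedean valuation $|\cdot|$, let $X$ be a complete non-Archimedean normed space over $K$, fix $k\in\mathbb N$ with $|2k^4|\neq0$, and for $f:G\to X$ let $$\Delta f(x,y)=f(kx+y)+f(kx-y)-k^2[f(x+y)+f(x-y)]-2k^2(k^2-1)f(x)+2(k^2-1)f(y).$$ Let $\beta:[0,\infty)\to[0,\infty)$ be a function satisfying (i) $\beta(|k|t)\le\beta(|k|)\beta(t)$ for all $t\ge0$, and (ii) $\beta(|k|)<|k|^4$. Let $\delta>0$, let $G$ be a normed space, and let $f:G\to X$ satisfy $$\|\Delta f(x,y)\|\le\delta[\beta(\|x\|)+\beta(\|y\|)]\quad\text{for all }x,y\in G.$$ Then there exists a unique quartic mapping $Q:G\to X$ (i.e. $\Delta Q(x,y)=0$ for all $x,y\in G$) such that $$\|f(x)-Q(x)\|\le\frac{1}{|2k^4|}\delta\,\beta(\|x\|)\quad\text{for all }x\in G.$$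
   Context: A non-Archimedean field is a field $K$ with $|\cdot|:K\to[0,\infty)$ such that $|r|=0$ iff $r=0$, $|rs|=|r||s|$, $|r+s|\le\max\{|r|,|s|\}$. A non-Archimedean norm on a $K$-vector space satisfies $\|x\|=0$ iff $x=0$, $\|rx\|=|r|\|x\|$, $\|x+y\|\le\max\{\|x\|,\|y\|\}$. Integers are regarded as elements of $K$ and $|k|$ is the valuation of $k$ in $K$. *)

(* Defs.v *)
From HB Require Import structures.
From mathcomp Require Import all_boot all_order all_algebra.
Set Implicit Arguments. Unset Strict Implicit. Unset Printing Implicit Defensive.
Import Order.TTheory GRing.Theory Num.Theory.
Local Open Scope ring_scope.

Definition nonarch_abs (R : realFieldType) (K : fieldType) (abs : K -> R) : Prop :=
  [/\ forall r, 0 <= abs r,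
      forall r, abs r = 0 <-> r = 0,
      forall r s, abs (r * s) = abs r * abs s &
      forall r s, abs (r + s) <= Num.max (abs r) (abs s)].

Definition nontrivial_abs (R : realFieldType) (K : fieldType) (abs : K -> R) : Prop :=
  exists r : K, abs r <> 0 /\ abs r <> 1.

Definition nonarch_norm (R : realFieldType) (K : fieldType) (abs : K -> R)
  (X : lmodType K) (nrm : X -> R) : Prop :=
  [/\ forall x, 0 <= nrm x,
      forall x, nrm x = 0 <-> x = 0,
      forall (r : K) x, nrm (r *: x) = abs r * nrm x &
      forall x y, nrm (x + y) <= Num.max (nrm x) (nrm y)].

Definition is_norm (R : realFieldType) (K : fieldType) (abs : K -> R)
  (G : lmodType K) (nrm : G -> R) : Prop :=
  [/\ forall x, 0 <= nrm x,
      forall x, nrm x = 0 <-> x = 0,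
      forall (r : K) x, nrm (r *: x) = abs r * nrm x &
      forall x y, nrm (x + y) <= nrm x + nrm y].

Definition complete_wrt (R : realFieldType) (K : fieldType) (X : lmodType K)
  (nrm : X -> R) : Prop :=
  forall u : nat -> X,
    (forall e : R, 0 < e -> exists N : nat, forall m n : nat,
        (N <= m)%N -> (N <= n)%N -> nrm (u m - u n) < e) ->
    exists l : X, forall e : R, 0 < e -> exists N : nat, forall n : nat,
        (N <= n)%N -> nrm (u n - l) < e.

Definition Delta (K : fieldType) (G X : lmodType K) (k : nat) (f : G -> X)
  (x y : G) : X :=
  let c : K := k%:R in
  f (c *: x + y) + f (c *: x - y) - c ^+ 2 *: (f (x + y) + f (x - y))
  - (2 * c ^+ 2 * (c ^+ 2 - 1)) *: f x + (2 * (c ^+ 2 - 1)) *: f y.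

Definition quartic (K : fieldType) (G X : lmodType K) (k : nat) (Q : G -> X) : Prop :=
  forall x y, Delta k Q x y = 0.

(* Main.v *)
Require Import Defs.
From HB Require Import structures.
From mathcomp Require Import all_boot all_order all_algebra.
From mathcomp Require Import reals.
From mathcomp Require Import ring lra.
From Stdlib Require IndefiniteDescription FunctionalExtensionality.
Import Order.TTheory GRing.Theory Num.Theory.
Local Open Scope ring_scope.

Set Implicit Arguments. Unset Strict Implicit.


Lemma abs1 (R : realFieldType) (K : fieldType) (abs : K -> R) :
  nonarch_abs abs -> abs 1 = 1.
Proof.
case=> h0 h1 hM _.
have : abs 1 * abs 1 = abs 1 by rewrite -hM mulr1.
have : abs 1 != 0 by apply/eqP => /h1 /eqP; rewrite oner_eq0.
move=> nz e; apply: (mulfI nz); by rewrite e mulr1.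
Qed.

Lemma absX (R : realFieldType) (K : fieldType) (abs : K -> R) x n :
  nonarch_abs abs -> abs (x ^+ n) = abs x ^+ n.
Proof.
move=> h; elim: n => [|n IH]; first by rewrite !expr0 abs1.
by case: h => _ _ hM _; rewrite !exprS hM IH.
Qed.

Lemma absV (R : realFieldType) (K : fieldType) (abs : K -> R) x :
  nonarch_abs abs -> x != 0 -> abs (x^-1) = (abs x)^-1.
Proof.
move=> h nz; have := h => -[h0 h1 hM _].
have : abs x * abs x^-1 = 1 by rewrite -hM mulfV // abs1.
have ax : abs x != 0 by apply/eqP => /h1 /eqP; rewrite (negbTE nz).
move=> e; apply: (mulfI ax); rewrite e mulfV //.
Qed.

Lemma absN1 (R : realFieldType) (K : fieldType) (abs : K -> R) :
  nonarch_abs abs -> abs (-1) = 1.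
Proof.
move=> h; have := h => -[h0 h1 hM _].
have e : abs (-1) ^+ 2 = 1 ^+ 2 by rewrite expr2 -hM mulrNN mulr1 abs1 // expr1n.
by move/eqP: e; rewrite eqrXn2 // => /eqP.
Qed.

Lemma abs_nat (R : realFieldType) (K : fieldType) (abs : K -> R) n :
  nonarch_abs abs -> abs (n%:R) <= 1.
Proof.
move=> h; have := h => -[h0 h1 hM hU].
elim: n => [|n IH]; first by have /h1 -> : (0%:R : K) = 0 by []; rewrite ler01.
rewrite mulrS; apply: (le_trans (hU _ _)).
by rewrite ge_max abs1 // lexx IH.
Qed.

Lemma nX0 (R : realFieldType) (K : fieldType) (abs : K -> R) (X : lmodType K) (nX : X -> R) :
  nonarch_norm abs nX -> nX 0 = 0.
Proof. by case=> _ h _ _; apply/h. Qed.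

Lemma nXN (R : realFieldType) (K : fieldType) (abs : K -> R) (X : lmodType K) (nX : X -> R) x :
  nonarch_abs abs -> nonarch_norm abs nX -> nX (- x) = nX x.
Proof.
move=> ha [_ _ hZ _]; by rewrite -scaleN1r hZ absN1 // mul1r.
Qed.

Lemma nXZ (R : realFieldType) (K : fieldType) (abs : K -> R) (X : lmodType K) (nX : X -> R) r x :
  nonarch_norm abs nX -> nX (r *: x) = abs r * nX x.
Proof. by case. Qed.

Lemma nXge0 (R : realFieldType) (K : fieldType) (abs : K -> R) (X : lmodType K) (nX : X -> R) x :
  nonarch_norm abs nX -> 0 <= nX x.
Proof. by case. Qed.

Lemma nXU (R : realFieldType) (K : fieldType) (abs : K -> R) (X : lmodType K) (nX : X -> R) x y :
  nonarch_norm abs nX -> nX (x + y) <= Num.max (nX x) (nX y).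
Proof. by case. Qed.

Lemma nXT (R : realFieldType) (K : fieldType) (abs : K -> R) (X : lmodType K) (nX : X -> R) x y :
  nonarch_norm abs nX -> nX (x + y) <= nX x + nX y.
Proof.
move=> h; apply: (le_trans (nXU x y h)).
by rewrite ge_max lerDl lerDr !(nXge0 _ h).
Qed.

Lemma nXsym (R : realFieldType) (K : fieldType) (abs : K -> R) (X : lmodType K) (nX : X -> R) x y :
  nonarch_abs abs -> nonarch_norm abs nX -> nX (x - y) = nX (y - x).
Proof. by move=> ha h; rewrite -(nXN _ ha h) opprB. Qed.

Lemma geo_small (R : realType) (r e : R) : 0 <= r -> r < 1 -> 0 < e ->
  exists N : nat, r ^+ N < e.
Proof.
move=> r0 r1 e0.
have [->|rn0] := eqVneq r 0; first by exists 1%N; rewrite expr1.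
have rp : 0 < r by rewrite lt_def rn0.
set s := r^-1.
have s1 : 1 < s by rewrite /s invf_gt1.
have bern : forall n : nat, 1 + n%:R * (s - 1) <= s ^+ n.
  elim=> [|n IH]; first by rewrite mul0r addr0 expr0.
  rewrite exprS mulrSr.
  have sn : 0 <= s ^+ n by rewrite exprn_ge0 // ltW // (lt_trans ltr01).
  have n0 : 0 <= (n%:R : R) by rewrite ler0n.
  move: IH sn n0; set m := (n%:R : R); set t := s ^+ n => IH sn n0.
  have h1 : 0 <= m * ((s - 1) * (s - 1)) by rewrite mulr_ge0 // mulr_ge0 // subr_ge0 ltW.
  have h2 : 0 <= s * (t - (1 + m * (s - 1))) by rewrite mulr_ge0 ?subr_ge0 // ltW // (lt_trans ltr01).
  nra.
have [N hN] : exists N : nat, e^-1 / (s - 1) < N%:R.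
  exists (Num.Def.archi_bound (e^-1 / (s - 1))); apply: archi_boundP.
  by rewrite divr_ge0 // ltW // ?invr_gt0 // subr_gt0.
exists N.
have sN := bern N.
have spos : 0 < s - 1 by rewrite subr_gt0.
have : e^-1 < s ^+ N.
  apply: lt_le_trans sN; rewrite -ltrBlDl.
  rewrite ltr_pdivrMr // in hN.
  apply: le_lt_trans hN; rewrite lerBlDl lerDr ler01 //.
have -> : r ^+ N = (s ^+ N)^-1 by rewrite /s exprVn invrK.
move=> h; rewrite -(invrK e) ltf_pV2 ?posrE ?invr_gt0 //.
by rewrite exprn_gt0 // (lt_trans ltr01).
Qed.


Lemma subDD (V : zmodType) (u u' v v' : V) : (u - u') + (v - v') = (u + v) - (u' + v').
Proof. by rewrite addrACA opprD. Qed.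
Lemma subBB (V : zmodType) (u u' v v' : V) : (u - u') - (v - v') = (u - v) - (u' - v').
Proof. have := @subDD V u u' (-v) (-v'); rewrite opprK => <-. by rewrite opprB [v' - v]addrC. Qed.
Lemma zmod_shape (V : zmodType) (p m a c d p' m' a' c' d' : V) :
  (p + m - a - c + d) - (p' + m' - a' - c' + d') =
  ((p - p') + (m - m')) - (a - a') - (c - c') + (d - d').
Proof. by rewrite (@subDD V p) (@subBB V (p + m)) subBB subDD. Qed.

Lemma Delta_lin (K : fieldType) (G X : lmodType K) k (h1 h2 : G -> X) x y :
  Delta k (fun z => h1 z - h2 z) x y = Delta k h1 x y - Delta k h2 x y.
Proof.
rewrite /Delta /= zmod_shape -!scalerBr; congr (_ - _ *: _ - _ + _).
by rewrite subDD.
Qed.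

Lemma DeltaZ (K : fieldType) (G X : lmodType K) k s (h : G -> X) x y :
  Delta k (fun z => s *: h z) x y = s *: Delta k h x y.
Proof.
by rewrite /Delta /= !(scalerDr, scalerN, scalerA) ![s * _]mulrC.
Qed.

Lemma Delta_comp (K : fieldType) (G X : lmodType K) k t (h : G -> X) x y :
  Delta k (fun z => h (t *: z)) x y = Delta k h (t *: x) (t *: y).
Proof.
by rewrite /Delta /= !(scalerDr, scalerN, scalerA) ![t * _]mulrC.
Qed.

Lemma Delta_y0 (K : fieldType) (G X : lmodType K) k (h : G -> X) x :
  Delta k h x 0 = 2 *: h ((k%:R : K) *: x) - (2 * (k%:R : K) ^+ 4) *: h x
     + (2 * ((k%:R : K) ^+ 2 - 1)) *: h 0.
Proof.
rewrite /Delta /= !addr0 !subr0.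
congr (_ + _).
rewrite -[in LHS]addrA; congr (_ + _).
  by rewrite -mulr2n -scaler_nat.
rewrite -opprD; congr (- _).
by rewrite scalerDr -!scalerDl; congr (_ *: _); ring.
Qed.

Lemma Delta_00 (K : fieldType) (G X : lmodType K) k (h : G -> X) :
  Delta k h 0 0 = (2 * (k%:R : K) ^+ 2 * (1 - (k%:R : K) ^+ 2)) *: h 0.
Proof.
rewrite Delta_y0 scaler0 -scalerBl -scalerDl.
by congr (_ *: _); ring.
Qed.


Lemma abs_le1M (R : realFieldType) (K : fieldType) (abs : K -> R) u v :
  nonarch_abs abs -> abs u <= 1 -> abs v <= 1 -> abs (u * v) <= 1.
Proof.
move=> ha hu hv; have := ha => -[h0 _ hM _]; rewrite hM.
by rewrite -(mulr1 1) ler_pM.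
Qed.

Lemma Delta_bound (R : realFieldType) (K : fieldType) (abs : K -> R) (X G : lmodType K)
  (nX : X -> R) k (h : G -> X) x y M :
  nonarch_abs abs -> nonarch_norm abs nX ->
  nX (h ((k%:R : K) *: x + y)) <= M -> nX (h ((k%:R : K) *: x - y)) <= M ->
  nX (h (x + y)) <= M -> nX (h (x - y)) <= M -> nX (h x) <= M -> nX (h y) <= M ->
  nX (Delta k h x y) <= M.
Proof.
move=> ha hn h1 h2 h3 h4 h5 h6.
have M0 : 0 <= M by apply: le_trans h6; apply: nXge0 hn.
have addM : forall u v, nX u <= M -> nX v <= M -> nX (u + v) <= M.
  by move=> u v hu hv; apply: (le_trans (nXU u v hn)); rewrite ge_max hu hv.
have scM : forall s u, abs s <= 1 -> nX u <= M -> nX (s *: u) <= M.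
  move=> s u hs hu; rewrite (nXZ _ _ hn) -(mul1r M).
  have as0 : 0 <= abs s by case: ha.
  have nu0 : 0 <= nX u by apply: nXge0 hn.
  by rewrite ler_pM.
have c1 : abs (k%:R : K) <= 1 by apply: abs_nat.
have c2 : abs ((k%:R : K) ^+ 2) <= 1.
  by rewrite (absX _ _ ha) exprn_ile1 //; case: ha.
have c3 : abs ((k%:R : K) ^+ 2 - 1) <= 1.
  have := ha => -[_ _ _ hU].
  by apply: (le_trans (hU _ _)); rewrite ge_max c2 (absN1 ha) lexx.
have c4 : abs (2 : K) <= 1 by apply: (abs_nat 2 ha).
rewrite /Delta /=.
apply: (addM); last by apply: (scM) => //; apply: abs_le1M.
apply: (addM); last first.
  by rewrite (nXN _ ha hn); apply: (scM) => //; apply: abs_le1M => //; apply: abs_le1M.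
apply: (addM); first by apply: (addM).
by rewrite (nXN _ ha hn); apply: (scM) => //; apply: (addM).
Qed.

Unset Implicit Arguments. Set Strict Implicit.

Theorem corollary3p2 (R : realType) (K : fieldType) (abs : K -> R)
  (X : lmodType K) (nX : X -> R) (G : lmodType K) (nG : G -> R)
  (k : nat) (beta : R -> R) (delta : R) (f : G -> X) :
  nonarch_abs abs -> nontrivial_abs abs ->
  nonarch_norm abs nX -> complete_wrt nX ->
  abs (2 * (k%:R : K) ^+ 4) != 0 ->
  (forall t, 0 <= t -> 0 <= beta t) ->
  (forall t, 0 <= t -> beta (abs (k%:R : K) * t) <= beta (abs (k%:R : K)) * beta t) ->
  beta (abs (k%:R : K)) < abs (k%:R : K) ^+ 4 ->
  0 < delta ->
  is_norm abs nG ->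
  (forall x y : G, nX (Delta k f x y) <= delta * (beta (nG x) + beta (nG y))) ->
  exists Q : G -> X,
    [/\ quartic k Q,
        (forall x : G, nX (f x - Q x) <= delta * beta (nG x) / abs (2 * (k%:R : K) ^+ 4)) &
        (forall Q' : G -> X, quartic k Q' ->
           (forall x : G, nX (f x - Q' x) <= delta * beta (nG x) / abs (2 * (k%:R : K) ^+ 4)) ->
           Q' = Q)].
Proof.
move=> ha hnt hn hc h2k bpos bmul blt dpos hG hf.
have [abs0 absE absM absU] := ha.
have [nXp nXE nXZ' nXU'] := hn.
have [nG0' nGE nGZ nGT] := hG.
have nG0 : nG 0 = 0 by apply/nGE.
set c := (k%:R : K) in h2k bmul blt *.
have c0 : c != 0.
  apply/eqP => e; move: h2k; rewrite e exprS mul0r mulr0.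
  have -> : abs 0 = 0 by apply/absE.
  by rewrite eqxx.
have two0 : (2 : K) != 0.
  apply/eqP => e; move: h2k; rewrite e mul0r.
  have -> : abs 0 = 0 by apply/absE.
  by rewrite eqxx.
set a := abs c in bmul blt *.
have a0 : 0 < a by rewrite lt_def abs0 andbT; apply/eqP => /absE; apply/eqP.
have a1 : a <= 1 by apply: abs_nat.
have a4 : a ^+ 4 <= 1 by rewrite exprn_ile1 // ltW.
have ba0 : 0 <= beta a by apply: bpos; apply: ltW.
have ba1 : beta a < 1 by apply: lt_le_trans a4.
have b0 : beta 0 = 0.
  have := bmul 0 (lexx 0); rewrite mulr0 => h.
  have := bpos 0 (lexx 0) => h'.
  apply/eqP; rewrite eq_le h' andbT; nra.
have nXsub : forall u v, nX (u - v) = 0 -> u = v.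
  by move=> u v /nXE /subr0_eq.
have [c21|c21] := eqVneq (c ^+ 2) 1.
  have aa2 : a * a = 1 by rewrite /a -absM -expr2 c21; apply: abs1.
  have aa : a = 1 by apply/eqP; rewrite eq_le; apply/andP; split; nra.
  have bz : forall t, 0 <= t -> beta t = 0.
    move=> t t0; have := bmul t t0; rewrite aa mul1r => h.
    have := bpos t t0 => h'.
    have ba : beta 1 < 1 by move: ba1; rewrite aa.
    have b10 : 0 <= beta 1 by move: ba0; rewrite aa.
    apply/eqP; rewrite eq_le h' andbT; nra.
  exists f; split.
  - move=> x y; apply/nXE; apply/eqP; rewrite eq_le (nXge0 _ hn) andbT.
    by have := hf x y; rewrite !bz // addr0 mulr0.
  - by move=> x; rewrite subrr (nX0 hn) bz // mulr0 mul0r.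
  - move=> Q' _ hQ'; apply: FunctionalExtensionality.functional_extensionality => x.
    symmetry; apply: nXsub; apply/eqP; rewrite eq_le (nXge0 _ hn) andbT.
    by have := hQ' x; rewrite bz // mulr0 mul0r.
have f0 : f 0 = 0.
  have := hf 0 0; rewrite Delta_00 -/c nXZ' nG0 b0 addr0 mulr0 => h.
  have cf : 0 < abs (2 * c ^+ 2 * (1 - c ^+ 2)).
    rewrite lt_def abs0 andbT; apply/eqP => /absE /eqP.
    apply/negP; rewrite mulf_neq0 // ?mulf_neq0 // ?expf_neq0 //.
    by rewrite subr_eq0 eq_sym.
  apply/nXE; apply/eqP; rewrite eq_le (nXge0 _ hn) andbT.
  by rewrite -(pmulr_rle0 _ cf).
pose d := (c ^+ 4)^-1.
have keyE : forall h : G -> X, h 0 = 0 -> forall x,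
    h x - d *: h (c *: x) = (- (2 * c ^+ 4)^-1) *: Delta k h x 0.
  move=> h h0 x; rewrite Delta_y0 -/c h0 scaler0 addr0 scalerBr !scalerA addrC.
  congr (_ + _).
    rewrite -scaleNr; congr (_ *: _); rewrite /d; field.
  by apply/andP; split.
  rewrite -scaleNr -[LHS]scale1r; congr (_ *: _); field.
  by apply/andP; split.
have Dpos : 0 < abs (2 * c ^+ 4) by rewrite lt_def abs0 andbT h2k.
set D := abs (2 * c ^+ 4) in Dpos *.
have absNeg : forall u, abs (- u) = abs u.
  by move=> u; rewrite -mulN1r absM (absN1 ha) mul1r.
have absd : abs d = (a ^+ 4)^-1.
  by rewrite /d (absV ha) ?expf_neq0 // (absX _ _ ha).
pose r := beta a / a ^+ 4.
have a4pos : 0 < a ^+ 4 by rewrite exprn_gt0.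
have r0 : 0 <= r by rewrite /r divr_ge0 // ltW.
have r1 : r < 1 by rewrite /r ltr_pdivrMr // mul1r.
have bpow : forall n t, 0 <= t -> beta (a ^+ n * t) <= beta a ^+ n * beta t.
  move=> n t t0; elim: n => [|n IH]; first by rewrite !expr0 !mul1r.
  rewrite exprS -mulrA.
  apply: (le_trans (bmul _ _)); first by rewrite mulr_ge0 // exprn_ge0 // ltW.
  by rewrite exprS -mulrA ler_wpM2l.
have nGp : forall x, 0 <= nG x by [].
have scaleb : forall n x, ((a ^+ 4)^-1) ^+ n * beta (nG (c ^+ n *: x)) <= r ^+ n * beta (nG x).
  move=> n x; rewrite nGZ (absX _ _ ha) -/a.
  apply: (le_trans (ler_wpM2l _ (bpow n _ (nGp x)))).
    by rewrite exprn_ge0 // invr_ge0 ltW.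
  by rewrite mulrA -exprMn /r [beta a / _]mulrC lexx.
pose W x := delta * beta (nG x) / D.
have W0 : forall x, 0 <= W x.
  move=> x; apply: divr_ge0; last exact: ltW Dpos.
  by apply: mulr_ge0; [exact: ltW dpos | apply: bpos; exact: nGp].
have scaleW : forall n x, ((a ^+ 4)^-1) ^+ n * W (c ^+ n *: x) <= r ^+ n * W x.
  move=> n x; rewrite /W.
  have -> : ((a ^+ 4)^-1) ^+ n * (delta * beta (nG (c ^+ n *: x)) / D)
     = delta / D * (((a ^+ 4)^-1) ^+ n * beta (nG (c ^+ n *: x))) by ring.
  have -> : r ^+ n * (delta * beta (nG x) / D) = delta / D * (r ^+ n * beta (nG x)) by ring.
  apply: ler_wpM2l; last exact: scaleb.
  by apply: divr_ge0; apply: ltW.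
have fbound : forall x, nX (f x - d *: f (c *: x)) <= W x.
  move=> x; rewrite keyE // nXZ' absNeg (absV ha) ?mulf_neq0 ?expf_neq0 // -/D.
  have := hf x 0; rewrite nG0 b0 addr0 => h.
  rewrite /W mulrC ler_pdivlMr //.
  by rewrite -mulrA mulVf ?mulr1 // gt_eqF.
have nXs : forall u v, nX (u - v) = nX (v - u).
  by move=> u v; apply: (nXsym _ _ ha hn).
have nXN' : forall u, nX (- u) = nX u by move=> u; apply: (nXN _ ha hn).
have sub3 : forall u v w : X, u - w = (u - v) + (v - w).
  by move=> u v w; rewrite addrA subrK.
have Mle : forall u v (M : R), nX u <= M -> nX v <= M -> nX (u + v) <= M.
  by move=> u v M hu hv; apply: (le_trans (nXU' u v)); rewrite ge_max hu hv.
pose g n x := d ^+ n *: f (c ^+ n *: x).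
have g0 : forall x, g 0%N x = f x by move=> x; rewrite /g !expr0 !scale1r.
have gstep : forall n x, g n.+1 x - g n x =
    d ^+ n *: - (f (c ^+ n *: x) - d *: f (c *: (c ^+ n *: x))).
  by move=> n x; rewrite /g exprSr exprS -!scalerA -scalerBr opprB.
have sa : 0 <= (a ^+ 4)^-1 by rewrite invr_ge0 ltW.
have gsb : forall n x, nX (g n.+1 x - g n x) <= r ^+ n * W x.
  move=> n x; rewrite gstep nXZ' nXN' (absX _ _ ha) absd.
  apply: le_trans (scaleW n x).
  by rewrite ler_wpM2l // ?exprn_ge0 //.
have rmono : forall m n, (m <= n)%N -> r ^+ n <= r ^+ m.
  by move=> m n mn; apply: ler_wiXn2l => //; apply: ltW.
have gc : forall N j x, nX (g (N + j)%N x - g N x) <= r ^+ N * W x.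
  move=> N j x; elim: j => [|j IH].
    by rewrite addn0 subrr (nX0 hn) mulr_ge0 // exprn_ge0.
  rewrite addnS (sub3 _ (g (N + j)%N x)); apply: Mle => //.
  apply: (le_trans (gsb _ _)); rewrite ler_wpM2r //; apply: rmono.
  by rewrite leq_addr.
have gc2 : forall N m n x, (N <= m)%N -> (N <= n)%N ->
    nX (g m x - g n x) <= r ^+ N * W x.
  move=> N m n x hm hn'; rewrite (sub3 _ (g N x)); apply: Mle.
    by rewrite -(subnKC hm); apply: gc.
  by rewrite nXs -(subnKC hn'); apply: gc.
have geoW : forall (V e : R), 0 <= V -> 0 < e -> exists N, forall n, (N <= n)%N -> r ^+ n * V < e.
  move=> V e V0 e0.
  have [N hN] := geo_small r0 r1 (divr_gt0 e0 (ltr_wpDl V0 ltr01)).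
  exists N => n hnN.
  have hV : r ^+ n * V <= r ^+ n * (V + 1).
    by apply: ler_wpM2l; [exact: exprn_ge0 | rewrite lerDl ler01].
  apply: (le_lt_trans hV).
  by rewrite -ltr_pdivlMr ?(ltr_wpDl V0 ltr01) //; apply: le_lt_trans hN; apply: rmono.
have cauchy : forall x, forall e : R, 0 < e -> exists N : nat, forall m n : nat,
        (N <= m)%N -> (N <= n)%N -> nX (g m x - g n x) < e.
  move=> x e e0; have [N hN] := geoW (W x) e (W0 x) e0.
  by exists N => m n hm hn'; apply: le_lt_trans (gc2 N m n x hm hn') (hN N (leqnn N)).
have [Q hQ] : exists Q : G -> X, forall x e, 0 < e -> exists N : nat,
    forall n, (N <= n)%N -> nX (g n x - Q x) < e.
  exists (fun x => proj1_sig (IndefiniteDescription.constructive_indefinite_description _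
                     (hc (fun n => g n x) (cauchy x)))).
  move=> x; exact: (proj2_sig (IndefiniteDescription.constructive_indefinite_description _
                     (hc (fun n => g n x) (cauchy x)))).
have Qbound : forall x, nX (f x - Q x) <= W x.
  move=> x; apply/ler_addgt0Pr => e e0.
  have [N hN] := hQ x e e0.
  rewrite (sub3 _ (g N x)); apply: Mle.
    rewrite -{1}(g0 x) nXs; apply: (le_trans (gc 0%N N x)).
    by rewrite expr0 mul1r lerDl ltW.
  by apply: (le_trans (ltW (hN N (leqnn N)))); rewrite lerDr.
have Vb : forall x y, 0 <= delta * (beta (nG x) + beta (nG y)).
  move=> x y; apply: mulr_ge0; first exact: ltW.
  by apply: addr_ge0; apply: bpos.
have qQ : quartic k Q.
  move=> x y; apply/nXE; apply/eqP; rewrite eq_le (nXge0 _ hn) andbT.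
  apply/ler_addgt0Pr => e e0; rewrite add0r.
  have [N0 hN0] := geoW _ e (Vb x y) e0.
  have [N1 hN1] := hQ (c *: x + y) e e0.
  have [N2 hN2] := hQ (c *: x - y) e e0.
  have [N3 hN3] := hQ (x + y) e e0.
  have [N4 hN4] := hQ (x - y) e e0.
  have [N5 hN5] := hQ x e e0.
  have [N6 hN6] := hQ y e e0.
  pose n := maxn N0 (maxn N1 (maxn N2 (maxn N3 (maxn N4 (maxn N5 N6))))).
  have Hn : [/\ (N0 <= n)%N, (N1 <= n)%N, (N2 <= n)%N, (N3 <= n)%N & 
                [/\ (N4 <= n)%N, (N5 <= n)%N & (N6 <= n)%N]].
    by rewrite /n !leq_max !leqnn !orbT.
  case: Hn => n0 n1 n2 n3 [n4 n5 n6].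
  have hgn : nX (Delta k (fun z => g n z) x y) <= e.
    rewrite /g (@DeltaZ K G X k (d ^+ n) (fun z => f (c ^+ n *: z)) x y).
    rewrite (@Delta_comp K G X k (c ^+ n) f x y) nXZ' (absX _ _ ha) absd.
    apply: (le_trans (ler_wpM2l (exprn_ge0 _ sa) (hf _ _))).
    apply: ltW; apply: le_lt_trans (hN0 n n0).
    rewrite mulrCA [r ^+ n * _]mulrCA; apply: ler_wpM2l; first exact: ltW.
    by rewrite !mulrDr lerD // scaleb.
  have hdiff : nX (Delta k (fun z => Q z - g n z) x y) <= e.
    have L : forall z N, (N <= n)%N -> (forall m, (N <= m)%N -> nX (g m z - Q z) < e) ->
        nX (Q z - g n z) <= e.
      by move=> z N hNn hz; rewrite nXs; apply: ltW; apply: hz.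
    apply: (Delta_bound ha hn).
    - exact: (L _ _ n1 hN1).
    - exact: (L _ _ n2 hN2).
    - exact: (L _ _ n3 hN3).
    - exact: (L _ _ n4 hN4).
    - exact: (L _ _ n5 hN5).
    - exact: (L _ _ n6 hN6).
  rewrite Delta_lin in hdiff.
  rewrite -(subrK (Delta k (fun z => g n z) x y) (Delta k Q x y)).
  exact: Mle hdiff hgn.
have quart0 : forall h : G -> X, quartic k h -> h 0 = 0.
  move=> h qh; have := qh 0 0; rewrite Delta_00 -/c => /eqP.
  rewrite scaler_eq0 => /orP [|/eqP //].
  rewrite mulf_eq0 mulf_eq0 (negbTE two0) expf_eq0 (negbTE c0) andbF /=.
  by rewrite subr_eq0 eq_sym (negbTE c21).
have qrec : forall h : G -> X, quartic k h -> forall n z, h z = d ^+ n *: h (c ^+ n *: z).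
  move=> h qh n z; elim: n z => [|n IH] z; first by rewrite !expr0 !scale1r.
  rewrite IH.
  have e1 : h (c ^+ n *: z) = d *: h (c *: (c ^+ n *: z)).
    by apply: subr0_eq; rewrite (keyE h (quart0 h qh)) (qh _ 0) scaler0.
  by rewrite e1 scalerA -exprSr scalerA -exprS.
exists Q; split => //.
move=> Q' qQ' hQ'; apply: FunctionalExtensionality.functional_extensionality => x.
apply: nXsub; apply/eqP; rewrite eq_le (nXge0 _ hn) andbT.
apply/ler_addgt0Pr => e e0; rewrite add0r.
have [N hN] := geoW (W x) e (W0 x) e0.
rewrite (qrec Q' qQ' N x) (qrec Q qQ N x) -scalerBr nXZ' (absX _ _ ha) absd.
apply: ltW; apply: le_lt_trans (hN N (leqnn N)).
apply: le_trans (scaleW N x).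
apply: ler_wpM2l; first exact: exprn_ge0.
rewrite (sub3 _ (f (c ^+ N *: x))); apply: Mle; last exact: Qbound.
by rewrite nXs; apply: hQ'.
Qed.
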